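(* Let $K$ be an algebraically closed field of characteristic $0$ and let $d,n$ be integers with $1<d<n$ and $\gcd(n,d)=1$. Then $n+d$ is $(n,d)$-reachable over $K$ if and only if $d^2-2d<n$.
   Context: For a polynomial $f(x)\in K[x]$ of degree $n$ without repeated roots, $\mathcal{C}_{f,d}$ denotes the smooth projective model of the affine curve $y^d=f(x)$; it has a unique point at infinity $O$. $\mathcal{C}_{f,d}$ is identified with its image in its Jacobian $J(\mathcal{C}_{f,d})$ via $Q\mapsto \operatorname{cl}((Q)-(O))$ (linear equivalence class), and a point $Q\in\mathcal{C}_{f,d}(K)$ has order $m$ if $\operatorname{cl}((Q)-(O))$ has order $m$ in $J(\mathcal{C}_{f,d})(K)$. An integer $m>1$ is called $(n,d)$-reachable over $K$ if there exists a monic polynomial $f(x)\in K[x]$ of degree $n$ without repeated roots such that $\mathcal{C}_{f,d}(K)$ contains a point of order $m$. *)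

(* Defs.v *)
From mathcomp Require Import all_boot all_order all_algebra.
Set Implicit Arguments. Unset Strict Implicit. Unset Printing Implicit Defensive.
Import Order.TTheory GRing.Theory Num.Theory.
Local Open Scope ring_scope.

(* Superelliptic curve C_{f,d}: smooth projective model of y^d = f(x),
   deg f = n, gcd(n,d) = 1, f without repeated roots.  Its affine points are
   the pairs (x0,y0) with y0^d = f(x0); there is one extra point O at infinity.

   Every regular function on C minus {O} (the coordinate ring
   K[x,y]/(y^d - f)) is uniquely h = sum_{j<d} a_j(x) y^j; we represent it by
   the sequence s = [:: a_0; ...; a_{d-1}] (size s <= d). *)

Section Superelliptic.
Variable K : fieldType.

Definition on_curve (f : {poly K}) (d : nat) (P : K * K) : bool :=
  P.2 ^+ d == f.[P.1].

Definition heval (s : seq {poly K}) (P : K * K) : K :=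
  \sum_(j < size s) (s`_j).[P.1] * P.2 ^+ j.

(* pole order at O of h = sum_{j<d} s_j(x) y^j, using ord_O(x) = -d and
   ord_O(y) = -n (distinct residues mod d since gcd(n,d)=1) *)
Definition pole_order (n d : nat) (s : seq {poly K}) : nat :=
  \max_(j < size s | nth 0%R s j != 0%R) (d * (size (nth 0%R s j)).-1 + n * j)%N.

(* m(Q) - m(O) is a principal divisor on C_{f,d}: there is a nonzero
   function h regular away from O, with pole of order exactly m at O and
   no zero at an affine point other than Q (then, the degree of div h being 0,
   div h = m(Q) - m(O)).  Equivalently cl((Q)-(O)) is killed by m. *)
Definition mult_principal (f : {poly K}) (d m : nat) (Q : K * K) : Prop :=
  exists s : seq {poly K},
    [/\ (size s <= d)%N, has (fun a => a != 0) s,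
        pole_order (size f).-1 d s = m &
        forall P, on_curve f d P -> heval s P = 0 -> P = Q].

(* Q is a K-point of C_{f,d} of order m in the Jacobian (for m > 1, such a
   point is necessarily affine, since O maps to 0) *)
Definition point_of_order (f : {poly K}) (d m : nat) (Q : K * K) : Prop :=
  [/\ on_curve f d Q, (0 < m)%N, mult_principal f d m Q &
      forall k, (0 < k < m)%N -> ~ mult_principal f d k Q].

Definition no_repeated_roots (f : {poly K}) : Prop :=
  forall a : K, ~~ (('X - a%:P) ^+ 2 %| f).

Definition reachable (n d m : nat) : Prop :=
  (1 < m)%N /\
  exists f : {poly K},
    [/\ f \is monic, size f = n.+1, no_repeated_roots f &
        exists Q : K * K, point_of_order f d m Q].
End Superelliptic.

(* Main.v *)
Require Import Defs.
From mathcomp Require Import all_boot all_order all_algebra.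
From mathcomp Require Import ring zify.
Set Implicit Arguments. Unset Strict Implicit. Unset Printing Implicit Defensive.
Import Order.TTheory GRing.Theory Num.Theory.
Local Open Scope ring_scope.

Lemma arith1 (n d k x sg : nat) : (1 < d)%N -> (d < n)%N -> (2 * sg.-1 <= x)%N ->
  (0 < sg)%N -> (k.+1 <= maxn d sg.+1)%N -> (x <= k)%N -> (n <= k)%N -> False.
Proof.
move=> h1 h2 h3 h4; rewrite leq_max => /orP [] h5 h6 h7; lia.
Qed.

Section S.
Variable K : closedFieldType.
Hypothesis hK : [pchar K] =i pred0.

Lemma natK0 m : (m%:R == 0 :> K) = (m == 0)%N.
Proof. by move/pcharf0P: hK. Qed.

Lemma dvd_deriv (t : K) (p : {poly K}) m :
  ('X - t%:P) ^+ m.+1 %| p -> ('X - t%:P) ^+ m %| p^`().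
Proof.
case/dvdpP=> q ->; rewrite derivM deriv_exp derivXsubC mul1r /=.
apply: dvdp_add; first by rewrite exprS mulrA dvdp_mull.
by rewrite -mulr_natr mulrA mulrC !mulrA dvdp_mull.
Qed.

Lemma rootX0 (p : {poly K}) : ('X %| p) = (p.[0] == 0).
Proof. by rewrite -[X in X %| _]subr0 -polyC0 -root_factor_theorem. Qed.

Lemma incr (p q : {poly K}) (t beta : K) m :
  q.[t] != 0 -> ('X - t%:P) ^+ m.+1 %| p ->
  ('X - t%:P) ^+ m.+1 %| q * p^`() + beta *: p ->
  ('X - t%:P) ^+ m.+2 %| p.
Proof.
move=> qt /dvdpP [r ->]; set P := 'X - t%:P.
have -> : q * (r * P ^+ m.+1)^`() + beta *: (r * P ^+ m.+1) =
   P ^+ m * (q * r^`() * P + q * r * (m.+1)%:R + beta%:P * r * P).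
  rewrite derivM deriv_exp /P derivXsubC mul1r -mul_polyC /= -mulr_natr exprS.
  move: (P ^+ m) ((m.+1)%:R) (r^`()) (beta%:P) => Pm k r' b.
  rewrite -/P. ring.
rewrite exprSr dvdp_mul2l ?expf_neq0 ?polyXsubC_eq0 //.
rewrite -root_factor_theorem /root /P !hornerE subrr !(mulr0, addr0).
rewrite add0r -polyC_natr hornerC mulf_eq0 natK0 orbF mulf_eq0 (negPf qt) /= => rt.
rewrite -mulrA -exprSr [X in X %| _]exprSr [r * _]mulrC dvdp_mul2l ?expf_neq0 ?polyXsubC_eq0 //.
by rewrite -root_factor_theorem.
Qed.

Lemma binom1 (R : comNzRingType) (a b : R) e :
  exists Y, (a + b) ^+ e.+1 = a ^+ e.+1 + a ^+ e * b * (e.+1)%:R + b ^+ 2 * Y.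
Proof.
elim: e => [|e [Y IH]].
  by exists 0; rewrite !expr1 expr0 mul1r mulr1 mulr0 addr0.
exists (a * Y + a ^+ e * (e.+1)%:R + b * Y).
rewrite exprS IH [a ^+ e.+2]exprS [a ^+ e.+1]exprS -(natr1 e.+1).
move: (a ^+ e) ((e.+1)%:R : R) => ae k. ring.
Qed.

Lemma val_lemma (A B : K) (P R : {poly K}) d k :
  A != 0 -> P.[0] != 0 -> R.[0] != 0 -> (0 < d)%N ->
  'X^k %| A%:P * P ^+ d + B%:P * R ^+ d -> exists z : K, 'X^k %| P - z%:P * R.
Proof.
move=> A0 P0 R0 d0 hS; set z := P.[0] / R.[0]; exists z.
have z0 : z != 0 by rewrite mulf_neq0 ?invr_eq0.
suff: forall j, (j <= k)%N -> 'X^j %| P - z%:P * R by apply.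
elim=> [|j IH] hj; first by rewrite expr0 dvd1p.
have {IH} := IH (ltnW hj); case: j hj => [|j] hj IH.
  by rewrite expr1 rootX0 !hornerE /z divfK ?subrr.
case/dvdpP: IH => w eL; set J := j.+1 in eL hj *.
have eP : P = z%:P * R + w * 'X^J by rewrite -eL addrC subrK.
case: d d0 hS => // e _ hS.
have S0 : (A%:P * P ^+ e.+1 + B%:P * R ^+ e.+1).[0] = 0.
  apply/eqP; rewrite -rootX0; apply: dvdp_trans hS.
  by rewrite -{1}(expr1 'X) dvdp_exp2l // (leq_trans _ hj).
have eB : B = - (A * z ^+ e.+1).
  move: S0; rewrite !hornerE /z => /eqP; rewrite addrC addr_eq0 => /eqP.
  rewrite exprMn exprVn mulrA => /(canRL (mulfK _)); rewrite expf_neq0 // => /(_ isT) ->.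
  by rewrite mulNr.
have [Y eY] := binom1 (z%:P * R) (w * 'X^J) e.
set T := A%:P * ((z%:P * R) ^+ e * w * (e.+1)%:R + 'X^J * (w ^+ 2 * Y)).
have eS : A%:P * P ^+ e.+1 + B%:P * R ^+ e.+1 = 'X^J * T.
  rewrite eP eY eB /T polyCN (polyCM A (z ^+ e.+1)) (polyC_exp e.+1 z) exprMn.
  move: ((e.+1)%:R : {poly K}) (z%:P) (A%:P) ('X^J) => c Z A' XJ. ring.
move: hS; rewrite eS => hS.
have : 'X^(J.+1) %| 'X^J * T by apply: dvdp_trans hS; rewrite dvdp_exp2l.
rewrite exprSr dvdp_mul2l ?expf_neq0 ?polyX_eq0 // rootX0 /T !hornerE expr0n /= !mul0r addr0.
rewrite -polyC_natr hornerC !mulf_eq0 (negPf A0) natK0 /=.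
rewrite expf_eq0 mulf_eq0 (negPf z0) (negPf R0) andbF /= orbF -rootX0 => /dvdpP [w' ew].
by rewrite eL ew -mulrA [X in X %| _]mulrC dvdp_mull.
Qed.

Lemma allroots (p : {poly K}) x0 : p != 0 -> (forall x, root p x -> x = x0) ->
  p = lead_coef p *: ('X - x0%:P) ^+ (size p).-1.
Proof.
move=> p0 h; case: (closed_field_poly_normal p) => r e.
have lc0 : lead_coef p != 0 by rewrite lead_coef_eq0.
have hr : forall z, z \in r -> z = x0.
  by move=> z zr; apply: h; rewrite e rootZ // root_prod_XsubC.
have ep : \prod_(z <- r) ('X - z%:P) = ('X - x0%:P) ^+ (size r).
  elim: r {e} hr => [|z r IH] hr; first by rewrite big_nil expr0.
  rewrite big_cons (hr z) ?mem_head // IH ?exprS // => w wr.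
  by apply: hr; rewrite in_cons wr orbT.
have sp : (size p).-1 = size r by rewrite {1}e size_scale // size_prod_XsubC.
by rewrite sp -ep {1}e.
Qed.

Lemma droot (a : K) e : exists y : K, y ^+ e.+1 = a.
Proof.
have [y hy] := solve_monicpoly (fun i => if i == 0%N then a else 0) (ltn0Sn e).
exists y; rewrite hy big_ord_recl /= expr0 mulr1 big1 ?addr0 // => i _.
by rewrite mul0r.
Qed.

Lemma unity_root e : (1 < e)%N -> exists z : K, z ^+ e = 1 /\ z != 1.
Proof.
move=> e1; set p := \poly_(i < e) (1 : K).
have sp : size p = e by rewrite size_poly_eq ?oner_neq0.
have /closed_rootP [z rz] : size p != 1 by rewrite sp neq_ltn e1 orbT.
move: rz; rewrite /root horner_poly => /eqP hz; exists z; split.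
  by apply/eqP; rewrite -subr_eq0 subrX1 (eq_bigr _ (fun i _ => mul1r _)) in hz *; rewrite hz mulr0.
apply/eqP=> z1; move: hz; rewrite z1 (eq_bigr (fun _ => 1)); last by move=> i _; rewrite expr1n mulr1.
by rewrite sumr_const card_ord => /eqP; rewrite natK0 => /eqP e0; move: e1; rewrite e0.
Qed.

Lemma nth_nz (s : seq {poly K}) j : s`_j != 0 -> (j < size s)%N.
Proof. by rewrite ltnNge; apply: contra => /(nth_default 0) ->. Qed.

Lemma po_le (n d : nat) (s : seq {poly K}) j : s`_j != 0 ->
  (d * (size (nth 0%R s j)).-1 + n * j <= pole_order n d s)%N.
Proof.
move=> sj; have js := nth_nz sj.
exact: (@leq_bigmax_cond _ (fun j : 'I_(size s) => s`_j != 0)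
          (fun j : 'I_(size s) => d * (size (nth 0%R s j)).-1 + n * j)%N (Ordinal js)).
Qed.

Lemma po_ub (n d : nat) (s : seq {poly K}) m :
  (forall j, s`_j != 0 -> (d * (size (nth 0%R s j)).-1 + n * j <= m)%N) ->
  (pole_order n d s <= m)%N.
Proof. by move=> h; apply/bigmax_leqP => j /h. Qed.

Lemma po_eq (n d : nat) (s : seq {poly K}) : has (fun a => a != 0) s ->
  exists j, s`_j != 0 /\ pole_order n d s = (d * (size (nth 0%R s j)).-1 + n * j)%N.
Proof.
case/(has_nthP 0) => j js sj.
have : (0 < #|[pred i : 'I_(size s) | nth 0%R s i != 0%R]|)%N.
  by apply/card_gt0P; exists (Ordinal js).
move/(eq_bigmax_cond (fun i : 'I_(size s) => d * (size (nth 0%R s i)).-1 + n * i)%N).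
by case=> i0; rewrite inE => h1 h2; exists i0.
Qed.

Lemma heval_two (s : seq {poly K}) (P : K * K) :
  (forall j, (2 <= j)%N -> s`_j = 0) ->
  heval s P = (s`_0).[P.1] + (s`_1).[P.1] * P.2.
Proof.
move=> h; rewrite /heval (big_ord_widen (size s).+2 (fun j => (s`_j).[P.1] * P.2 ^+ j)) ?leqW //.
rewrite big_mkcond /=.
rewrite (eq_bigr (fun i : 'I_ _ => (s`_i).[P.1] * P.2 ^+ i)); last first.
  move=> i _; case: ifP => // /negbT; rewrite -leqNgt => /(nth_default 0) ->.
  by rewrite horner0 mul0r.
rewrite !big_ord_recl big1 ?addr0 /=; first by rewrite expr0 mulr1 expr1.
by move=> i _; rewrite h // horner0 mul0r.
Qed.

Lemma iter_incr (p q : {poly K}) (t beta : K) m0 :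
  q.[t] != 0 -> root p t ->
  ('X - t%:P) ^+ m0 %| q * p^`() + beta *: p -> ('X - t%:P) ^+ m0.+1 %| p.
Proof.
move=> qt pt hD; suff: forall m, (m <= m0)%N -> ('X - t%:P) ^+ m.+1 %| p by apply.
elim=> [|m IH] hm; first by rewrite expr1 -root_factor_theorem.
apply: incr qt (IH (ltnW hm)) _.
by apply: dvdp_trans hD; rewrite dvdp_exp2l.
Qed.

Lemma coefXD (p : {poly K}) i : ('X * p^`())`_i = p`_i *+ i.
Proof. by rewrite coefXM; case: i => [|i] /=; [rewrite mulr0n | rewrite coef_deriv]. Qed.

Lemma size_subn (p q : {poly K}) : size p != size q ->
  size (p - q) = maxn (size p) (size q).
Proof.
case: (ltngtP (size p) (size q)) => // h _.
  by rewrite addrC size_polyDl size_polyN ?(maxn_idPr (ltnW h)).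
by rewrite size_polyDl ?size_polyN ?(maxn_idPl (ltnW h)).
Qed.

Lemma dvdD (p q : {poly K}) (t : K) m k : ('X - t%:P) ^+ m.+1 %| p ->
  ('X - t%:P) ^+ m %| q * p^`() - p *+ k.
Proof.
move=> h; apply: dvdp_sub; first exact/dvdp_mull/dvd_deriv.
by rewrite -mulr_natl; apply/dvdp_mull/(dvdp_trans _ h); rewrite dvdp_exp2l.
Qed.

Section Back.
Variables n d : nat.
Hypotheses (h1d : (1 < d)%N) (hdn : (d < n)%N) (hcop : coprime n d)
  (hdd : (d * d.-1 < n + d)%N).
Local Notation N := (n + d)%N.

Definition cG : {poly K} := ('X - 1%:P) ^+ d.-1.
Definition G : {poly K} := \poly_(i < d) (cG`_i / ((d * i)%:R - N%:R)).

Lemma d0 : (0 < d)%N. Proof. exact: ltn_trans _ h1d. Qed.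
Lemma dS : d.-1.+1 = d. Proof. exact: prednK d0. Qed.

Lemma den_nz i : (i < d)%N -> (d * i)%:R - N%:R != 0 :> K.
Proof.
move=> id; have lt : (d * i < N)%N.
  by apply: leq_ltn_trans hdd; rewrite leq_mul2l -ltnS dS id orbT.
rewrite -(subnK (ltnW lt)) natrD opprD addrCA subrr addr0 oppr_eq0 natK0.
by rewrite subn_eq0 -ltnNge lt.
Qed.

Lemma G_ode : 'X * G^`() *+ d - G *+ N = cG.
Proof.
apply/polyP => i; rewrite coefB !coefMn coefXD coef_poly -mulrnA.
case: ltnP => id.
  set x := cG`_i / _; rewrite -(mulr_natr x (i * d)) -(mulr_natr x N) -mulrBr [(i * d)%N]mulnC /x.
  by rewrite divfK ?den_nz.
by rewrite !mul0rn subrr nth_default // /cG size_exp_XsubC dS.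
Qed.

Lemma sizeG : (size G <= d)%N. Proof. exact: size_poly. Qed.

Lemma G0 : G.[0] != 0.
Proof.
apply/eqP => g0; move/(congr1 (fun p => p.[0])): G_ode.
rewrite !(hornerE, hornerMn) g0 !mul0rn subrr /cG => /esym/eqP.
by rewrite expf_eq0 oppr_eq0 oner_eq0 andbF.
Qed.

Lemma Gnz : G != 0.
Proof. by apply: contraNneq G0 => ->; rewrite horner0. Qed.

Lemma G1 : G.[1] != 0.
Proof.
apply/negP => g1.
have := @iter_incr G ('X *+ d) 1 (- (N%:R)) d.-1.
rewrite !(hornerE, hornerMn) natK0 -lt0n d0 => /(_ isT g1).
rewrite mulrnAl scaleNr scaler_nat G_ode dvdpp dS => /(_ isT) /(dvdp_leq Gnz).
by rewrite size_exp_XsubC ltnNge sizeG.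
Qed.

Definition mu : K := G.[1] ^+ d.
Lemma mu0 : mu != 0. Proof. exact: expf_neq0 G1. Qed.

Definition V : {poly K} := 'X^(n + d) - mu^-1 *: G ^+ d.

Lemma V_ode : 'X * V^`() - V *+ N = - mu^-1 *: (G ^+ d.-1 * cG).
Proof.
rewrite /V derivB derivXn derivZ deriv_exp -G_ode.
have eN : 'X^(n + d) = 'X * 'X^((n + d).-1) :> {poly K}.
  by rewrite -exprS prednK // addn_gt0 d0 orbT.
have eG : G ^+ d = G * G ^+ d.-1 by rewrite -exprS dS.
rewrite eN eG -!mul_polyC polyCN.
move: ('X^((n + d).-1)) (G ^+ d.-1) ((mu^-1)%:P) (G^`()) => XN Gd m G'.
ring.
Qed.

Lemma V1 : root V 1.
Proof. by rewrite /root /V !hornerE expr1n -/mu mulVf ?mu0 ?subrr. Qed.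

Lemma dvdV : ('X - 1%:P) ^+ d %| V.
Proof.
have := @iter_incr V 'X 1 (- (N%:R)) d.-1.
rewrite hornerX oner_neq0 V1 dS scaleNr scaler_nat V_ode; apply => //.
by rewrite dvdpZr ?oppr_eq0 ?invr_eq0 ?mu0 // dvdp_mull.
Qed.

Definition f : {poly K} := V %/ ('X - 1%:P) ^+ d.
Lemma ef : f * ('X - 1%:P) ^+ d = V. Proof. exact: divpK dvdV. Qed.

Lemma sizeGd : (size (mu^-1 *: G ^+ d) < N.+1)%N.
Proof.
apply: leq_ltn_trans (size_scale_leq _ _) _.
apply: leq_ltn_trans (size_poly_exp_leq _ _) _.
rewrite ltnS; apply: leq_ltn_trans hdd; rewrite mulnC leq_mul2l.
by rewrite -!subn1 leq_sub2r ?sizeG ?orbT.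
Qed.

Lemma size_V : size V = N.+1.
Proof. by rewrite /V size_polyDl size_polyXn // size_polyN sizeGd. Qed.

Lemma lead_V : lead_coef V = 1.
Proof. by rewrite /V lead_coefDl ?lead_coefXn // size_polyXn size_polyN sizeGd. Qed.

Lemma Vnz : V != 0.
Proof. by rewrite -size_poly_eq0 size_V. Qed.

Lemma fnz : f != 0.
Proof. by apply: contraNneq Vnz; rewrite -ef => ->; rewrite mul0r. Qed.

Lemma size_f : size f = n.+1.
Proof.
have := size_V; rewrite -ef size_Mmonic ?fnz ?monic_exp ?monicXsubC //.
by rewrite size_exp_XsubC addnS /= -addSn => /eqP; rewrite eqn_add2r => /eqP.
Qed.

Lemma f_monic : f \is monic.
Proof.
apply/monicP; have := lead_V; rewrite -ef lead_coefM.
by have /monicP -> := monic_exp d (monicXsubC (1 : K)); rewrite mulr1.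
Qed.

Lemma f0 : f.[0] != 0.
Proof.
apply/eqP => h; move/(congr1 (fun p => p.[0])): ef.
rewrite hornerM h mul0r /V !hornerE expr0n addn_eq0 (negPf (lt0n_neq0 d0)) andbF /= sub0r.
move/esym/eqP; rewrite oppr_eq0 mulf_eq0 invr_eq0 (negPf mu0) /= expf_eq0.
by rewrite (negPf G0) andbF.
Qed.
Lemma f_sqfree : no_repeated_roots f.
Proof.
move=> t; apply/negP => ht.
have hV : ('X - t%:P) ^+ 2 %| V by rewrite -ef dvdp_mulr.
have := dvdD 'X (n + d) hV; rewrite expr1 V_ode scaleNr dvdpNr dvdpZr ?invr_eq0 ?mu0 //.
rewrite -root_factor_theorem rootM => /orP [].
  rewrite /root hornerE expf_eq0 => /andP [_ Gt].
  have : root V t by rewrite root_factor_theorem (dvdp_trans _ hV) // -{1}(expr1 ('X - t%:P)) dvdp_exp2l.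
  rewrite /root /V !hornerE (eqP Gt) expr0n (negPf (lt0n_neq0 d0)) mulr0 subr0.
  by rewrite expf_eq0 => /andP [_ /eqP t0]; move: Gt; rewrite t0 (negPf G0).
rewrite /cG /root horner_exp expf_eq0 hornerXsubC subr_eq0 => /andP [_ /eqP t1]; subst t.
have hV2 : ('X - 1%:P) ^+ d.+2 %| V.
  rewrite -ef; case/dvdpP: ht => q ->; rewrite -mulrA -exprD add2n.
  by apply: dvdp_mull.
have := dvdD 'X (n + d) hV2; rewrite V_ode scaleNr dvdpNr dvdpZr ?invr_eq0 ?mu0 //.
have cop : coprimep ('X - 1%:P) G by rewrite coprimep_sym coprimep_XsubC G1.
rewrite Gauss_dvdpr; last by apply/coprimep_expl/coprimep_expr.
have cG0 : cG != 0 by rewrite expf_neq0 // polyXsubC_eq0.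
by move/(dvdp_leq cG0); rewrite /cG !size_exp_XsubC ltnNge leqW // -ltnS dS.
Qed.

Lemma sgn_aux (a b c : K) : a * a = 1 -> a * b * c * a = b * c.
Proof. by move=> h; transitivity (a * a * (b * c)); [ring | rewrite h mul1r]. Qed.

Lemma sgn2 : (-1 : K) ^+ d * (-1) ^+ d = 1.
Proof. by rewrite -exprMn mulrNN mulr1 expr1n. Qed.

Lemma ef_at x : f.[x] * (x - 1) ^+ d = x ^+ (n + d) - mu^-1 * G.[x] ^+ d.
Proof.
have := congr1 (fun p => p.[x]) ef; rewrite /= hornerM horner_exp hornerXsubC => ->.
by rewrite /V !hornerE.
Qed.

Section Z.
Variable z : K.
Hypothesis hz : z ^+ d = - mu^-1.

Definition s0 : seq {poly K} := [:: (- z) *: G; 'X - 1%:P].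
Definition Q0 : K * K := (0, - z * G.[0]).

Lemma znz : z != 0.
Proof. by apply/eqP => z0; move: hz; rewrite z0 expr0n (negPf (lt0n_neq0 d0)) => /eqP; rewrite eq_sym oppr_eq0 invr_eq0 (negPf mu0). Qed.

Lemma y0nz : - z * G.[0] != 0.
Proof. by rewrite mulf_neq0 ?oppr_eq0 ?znz ?G0. Qed.

Lemma Q_on : on_curve f d Q0.
Proof.
rewrite /on_curve /=; apply/eqP.
have s0 : (-1 : K) ^+ d != 0 by rewrite expf_neq0 // oppr_eq0 oner_eq0.
apply: (mulIf s0); have := ef_at 0; rewrite sub0r => ->.
rewrite expr0n addn_eq0 (negPf (lt0n_neq0 d0)) andbF sub0r /=.
by rewrite !exprMn exprNn hz sgn_aux ?sgn2 // mulNr.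
Qed.

Lemma heval_s0 P : heval s0 P = (- z) * G.[P.1] + (P.1 - 1) * P.2.
Proof.
rewrite heval_two /= ?hornerZ ?hornerXsubC //.
by case=> [|[|j]] //= _; rewrite nth_nil.
Qed.

Lemma zeros_s0 P : on_curve f d P -> heval s0 P = 0 -> P = Q0.
Proof.
case: P => x y; rewrite /on_curve heval_s0 /= => /eqP oc /eqP h.
have e1 : (x - 1) * y = z * G.[x].
  by move: h; rewrite addrC addr_eq0 mulNr opprK => /eqP.
have e2 : ((x - 1) * y) ^+ d = x ^+ (n + d) - mu^-1 * G.[x] ^+ d.
  by rewrite exprMn oc mulrC ef_at.
move: e2; rewrite e1 exprMn hz mulNr => /eqP; rewrite eq_sym subr_eq addrC subrr.
rewrite expf_eq0 => /andP [_ /eqP x0]; subst x.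
have e3 : y = - (z * G.[0]) by rewrite -e1; ring.
by rewrite /Q0 e3 mulNr.
Qed.

Lemma po_s0 : pole_order n d s0 = (n + d)%N.
Proof.
apply/eqP; rewrite eqn_leq; apply/andP; split.
  apply: po_ub => -[|[|j]].
  - move=> _ /=; rewrite muln0 addn0; apply: leq_trans (ltnW hdd); rewrite leq_mul2l.
    apply/orP; right; rewrite -!subn1 leq_sub2r //.
    exact: leq_trans (size_scale_leq _ _) sizeG.
  - by move=> _ /=; have := size_XsubC (1 : K); move=> ->; lia.
  - by rewrite nth_default ?eqxx.
have h1 : s0`_1 != 0 by rewrite /= polyXsubC_eq0.
apply: leq_trans (po_le n d h1); rewrite /=; have := size_XsubC (1 : K); move=> ->; lia.
Qed.

Lemma mp_s0 : mult_principal f d (n + d) Q0.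
Proof.
exists s0; split => //=; first by rewrite polyXsubC_eq0 orbT.
  by rewrite size_f po_s0.
exact: zeros_s0.
Qed.


Lemma comb_id (g : {poly K}) (A : K) :
  (A * mu^-1)%:P * G ^+ d + 1%:P * (('X - 1%:P) * g) ^+ d =
  ('X - 1%:P) ^+ d * (g ^+ d - A *: f) + A%:P * 'X^(n + d).
Proof.
have eV := ef; rewrite /V in eV.
rewrite -!mul_polyC exprMn.
transitivity (('X - 1%:P) ^+ d * g ^+ d - A%:P * (f * ('X - 1%:P) ^+ d) + A%:P * 'X^(n + d)).
  rewrite eV -mul_polyC polyCM.
  move: (('X - 1%:P) ^+ d) (G ^+ d) (g ^+ d) ('X^(n + d)) (A%:P) ((mu^-1)%:P) => X1 Gd gd XN A' m.
  ring.
move: (('X - 1%:P) ^+ d) (G ^+ d) (g ^+ d) ('X^(n + d)) (A%:P) ((mu^-1)%:P) f => X1 Gd gd XN A' m ff.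
ring.
Qed.

Lemma min_s0 k : (0 < k < n + d)%N -> ~ mult_principal f d k Q0.
Proof.
case/andP=> k0 kN [s [ss hs po hz0]].
rewrite size_f /= in po.
have hj2 : forall j, (2 <= j)%N -> s`_j = 0.
  move=> j j2; case: (eqVneq s`_j 0) => // sj; exfalso.
  have := po_le n d sj; rewrite po => hle.
  have : (n * 2 <= n * j)%N by rewrite leq_mul2l j2 orbT.
  move=> h2; move: hle; move: (d * _)%N => x hle; clear -hle kN hdn h2; lia.
set g := s`_0; set a := (s`_1)`_0.
have s1sz : (size (s`_1)%R <= 1)%N.
  case: (eqVneq s`_1 0) => [->|s1]; first by rewrite size_poly0.
  have := po_le n d s1; rewrite po muln1 => hle.
  move: hle; case: (size (s`_1)%R) => [|[|m]] //= hle.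
  have : (d * 1 <= d * m.+1)%N by rewrite leq_mul2l orbT.
  move: hle; move: (d * m.+1)%N => x; lia.
have es1 : s`_1 = a%:P := size1_polyC s1sz.
have hev : forall P, heval s P = g.[P.1] + a * P.2.
  by move=> P; rewrite heval_two // es1 hornerC.
have Qdef : forall P, on_curve f d P -> g.[P.1] + a * P.2 = 0 -> P = Q0.
  by move=> P oc h; apply: hz0; rewrite ?hev.
have [j [sj pj]] := po_eq n d hs; rewrite po in pj.
have j01 : (j < 2)%N by rewrite ltnNge; apply: contra sj => /hj2 ->.
case: (eqVneq a 0) => a0.
  have s10 : s`_1 = 0 by rewrite es1 a0.
  have j0 : j = 0%N by case: j j01 sj pj => [|[|]] //; rewrite s10 eqxx.
  subst j; rewrite muln0 addn0 in pj.
  have sg1 : size g != 1 by apply: contraTneq k0 => sg; rewrite pj sg muln0.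
  have /closed_rootP [t rt] := sg1.
  have [y hy] := droot (f.[t]) d.-1; rewrite dS in hy.
  have [ze [hze ze1]] := unity_root h1d.
  have e1 : (t, y) = Q0.
    by apply: Qdef; rewrite /on_curve /= ?hy ?(rootP rt) ?a0 ?mul0r ?add0r.
  have e2 : (t, ze * y) = Q0.
    by apply: Qdef; rewrite /on_curve /= ?exprMn ?hze ?mul1r ?hy ?(rootP rt) ?a0 ?mul0r ?add0r.
  have ey : ze * y = y by move: (congr1 snd e1) (congr1 snd e2) => /= -> ->.
  have yn0 : y != 0 by move: (congr1 snd e1) => /= ->; exact: y0nz.
  move/eqP: ey; rewrite -{2}[y]mul1r -subr_eq0 -mulrBl mulf_eq0 (negPf yn0) orbF subr_eq0.
  by rewrite (negPf ze1).
set A := (- a) ^+ d.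
have A0 : A != 0 by rewrite expf_neq0 // oppr_eq0.
set M := g ^+ d - A *: f.
have rM : forall x, root M x -> x = 0.
  move=> x; rewrite /root /M !hornerE subr_eq0 => /eqP hx.
  have : (x, g.[x] / (- a)) = Q0.
    apply: Qdef; rewrite /on_curve /=.
      by rewrite expr_div_n hx -/A [A * _]mulrC mulfK.
    by rewrite invrN mulrN mulrN mulrCA mulfV // mulr1 subrr.
  by move/(congr1 fst).
have gs : size (g ^+ d) != size (A *: f).
  rewrite size_scale // size_f.
  case: (eqVneq g 0) => [->|g0]; first by rewrite expr0n (negPf (lt0n_neq0 d0)) size_poly0.
  apply/eqP => e; move: (size_exp g d); rewrite e /= => en.
  have dn : (d %| n)%N by rewrite en dvdn_mull.
  by move: hcop; rewrite /coprime (gcdn_idPr dn) => /eqP d1; move: h1d; rewrite d1.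
have sM : size M = maxn (size (g ^+ d)) (size (A *: f)) := size_subn gs.
rewrite size_scale // size_f in sM.
have M0 : M != 0 by rewrite -size_poly_eq0 sM -lt0n leq_max orbT.
have kM : (k < size M)%N.
  rewrite sM leq_max; case: j j01 sj pj => [|[|]] // _ sj pj.
    rewrite muln0 addn0 in pj; apply/orP; left.
    have gd0 : g ^+ d != 0 by rewrite expf_neq0.
    have sp : (0 < size (g ^+ d))%N by rewrite lt0n size_poly_eq0.
    by rewrite -(prednK sp) size_exp pj ltnS mulnC.
  rewrite es1 size_polyC a0 muln1 /= muln0 add0n in pj.
  by rewrite pj ltnS leqnn orbT.
have XkM : 'X^k %| M.
  rewrite [M in _ %| M](allroots M0 rM) polyC0 subr0 dvdpZr ?lead_coef_eq0 //.
  by rewrite dvdp_exp2l // -ltnS prednK // lt0n size_poly_eq0.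
have knl : (n <= k)%N.
  have s1 : s`_1 != 0 by rewrite es1 polyC_eq0.
  by have := po_le n d s1; rewrite po es1 size_polyC a0 /= muln0 add0n muln1.
have g0 : g.[0] != 0.
  have : root M 0.
    rewrite /root -rootX0; apply: dvdp_trans XkM.
    by rewrite -{1}(expr1 'X) dvdp_exp2l.
  rewrite /root /M !hornerE subr_eq0; apply: contraTneq => ->.
  by rewrite expr0n (negPf (lt0n_neq0 d0)) eq_sym mulf_eq0 (negPf A0) (negPf f0).
have gnz : g != 0 by apply: contraNneq g0 => ->; rewrite horner0.
have hX : 'X^k %| (A * mu^-1)%:P * G ^+ d + 1%:P * (('X - 1%:P) * g) ^+ d.
  rewrite comb_id; apply: dvdp_add; first exact: dvdp_mull.
  by apply: dvdp_mull; rewrite dvdp_exp2l // ltnW.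
have R0 : (('X - 1%:P) * g).[0] != 0.
  by rewrite hornerM hornerXsubC sub0r mulN1r oppr_eq0.
have [w hw] := val_lemma (mulf_neq0 A0 (invr_neq0 mu0)) G0 R0 d0 hX.
set L := G - w%:P * (('X - 1%:P) * g) in hw.
have L0 : L != 0.
  apply/eqP => L0; move: G1; rewrite -[G](subrK (w%:P * (('X - 1%:P) * g))) -/L L0 add0r.
  by rewrite !hornerM hornerC hornerXsubC subrr mul0r mulr0 eqxx.
have sL : (size L <= maxn d (size g).+1)%N.
  apply: leq_trans (size_polyD _ _) _; rewrite size_polyN geq_max !leq_max sizeG /=.
  apply/orP; right; rewrite mul_polyC; apply: leq_trans (size_scale_leq _ _) _.
  by apply: leq_trans (size_polyMleq _ _) _; rewrite size_XsubC.
have := dvdp_leq L0 hw; rewrite size_polyXn => kL.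
have kd : (d * (size g).-1 <= k)%N by have := po_le n d gnz; rewrite po muln0 addn0.
have h2 : (2 * (size g).-1 <= d * (size g).-1)%N by rewrite leq_mul2r h1d orbT.
have h0 : (0 < size g)%N by rewrite lt0n size_poly_eq0.
have kL2 := leq_trans kL sL.
exact: (arith1 h1d hdn h2 h0 kL2 kd knl).
Qed.
End Z.

Lemma back_main : reachable K n d (n + d).
Proof.
split; first by apply: (leq_trans h1d); rewrite leq_addl.
exists f; split; [exact: f_monic | exact: size_f | exact: f_sqfree |].
have [z hz] := droot (- mu^-1) d.-1; rewrite dS in hz.
exists (Q0 z); split; [exact: Q_on hz | by rewrite addn_gt0 d0 orbT | exact: mp_s0 hz | exact: min_s0 hz].
Qed.
End Back.

Lemma natr_subnz (a b : nat) : (a < b)%N -> a%:R - b%:R != 0 :> K.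
Proof.
move=> lt; rewrite -(subnK (ltnW lt)) natrD opprD addrCA subrr addr0 oppr_eq0 natK0.
by rewrite subn_eq0 -ltnNge lt.
Qed.

Section Fwd.
Variables n d : nat.
Hypotheses (h1d : (1 < d)%N) (hdn : (d < n)%N) (hcop : coprime n d).
Local Notation N := (n + d)%N.

Lemma fd0 : (0 < d)%N. Proof. exact: ltn_trans _ h1d. Qed.
Lemma fdS : d.-1.+1 = d. Proof. exact: prednK fd0. Qed.

Lemma nN : (0 < n < n + d)%N.
Proof. move: h1d hdn; clear; lia. Qed.

Lemma ndvd : ~ (d %| n)%N.
Proof.
move=> dn; move: hcop; rewrite /coprime (gcdn_idPr dn) => /eqP d1.
by move: h1d; rewrite d1.
Qed.

Lemma fwd_hj2 (s : seq {poly K}) : pole_order n d s = N ->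
  forall j, (2 <= j)%N -> s`_j = 0.
Proof.
move=> po j j2; case: (eqVneq s`_j 0) => // sj; exfalso.
have := po_le n d sj; rewrite po; move: (d * _)%N => x hle.
have : (n * 2 <= n * j)%N by rewrite leq_mul2l j2 orbT.
move: hle; move: (n * j)%N => y; lia.
Qed.

Lemma fwd_main (f : {poly K}) (Q : K * K) :
  size f = n.+1 -> point_of_order f d N Q -> (d * d.-1 < N)%N.
Proof.
move=> sf [oc _ [s [ss hs po hz0]] hmin]; rewrite sf /= in po.
have fnz : f != 0 by rewrite -size_poly_eq0 sf.
have hj2 := fwd_hj2 po.
set g := s`_0; set s1 := s`_1.
have hev : forall P, heval s P = g.[P.1] + s1.[P.1] * P.2 by move=> P; apply: heval_two.
have gsz : g != 0 -> (d * (size g).-1 < N)%N.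
  move=> gn; have := po_le n d gn; rewrite po muln0 addn0 leq_eqVlt => /orP [/eqP e|//].
  exfalso; apply: ndvd; have : (d %| n + d)%N by rewrite -e dvdn_mulr.
  by rewrite addnC dvdn_addr ?dvdnn.
have [j [sj pj]] := po_eq n d hs; rewrite po in pj.
have j01 : (j < 2)%N by rewrite ltnNge; apply: contra sj => /hj2 ->.
have s1sz : size s1 = 2.
  case: j j01 sj pj => [|[|]] // _ sj pj.
    by move: (gsz sj); rewrite -/g pj muln0 addn0 ltnn.
  move/eqP: pj; rewrite muln1 [(d * _ + n)%N]addnC eqn_add2l -{1}(muln1 d) eqn_pmul2l ?fd0 //.
  by rewrite -/s1; case: (size s1) => [|[|[|]]].
have s1nz : s1 != 0 by rewrite -size_poly_eq0 s1sz.
set x0 := Q.1.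
set u := (-1) ^+ d *: (s1 ^+ d * f).
set M := g ^+ d - u.
have rM : forall x, root M x -> x = x0.
  move=> x; rewrite /root /M /u hornerD hornerN hornerZ hornerM !horner_exp subr_eq0 => /eqP hx.
  case: (eqVneq s1.[x] 0) => s1x.
    have gx : g.[x] = 0.
      by move: hx; rewrite s1x expr0n (negPf (lt0n_neq0 fd0)) mul0r mulr0 => /eqP; rewrite expf_eq0 => /andP [_ /eqP].
    have [y hy] := droot f.[x] d.-1; rewrite fdS in hy.
    have : (x, y) = Q by apply: hz0; rewrite /on_curve ?hev /= ?hy ?gx ?s1x ?mul0r ?addr0.
    by move/(congr1 fst).
  have : (x, - g.[x] / s1.[x]) = Q.
    apply: hz0; rewrite /on_curve ?hev /=.
      by rewrite expr_div_n exprNn hx mulrA sgn2 mul1r mulrAC divff ?expf_neq0 // mul1r.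
    by rewrite mulrCA divff // mulr1 addrN.
  by move/(congr1 fst).
have su : size u = N.+1.
  rewrite /u size_scale ?expf_neq0 ?oppr_eq0 ?oner_eq0 // size_mul ?expf_neq0 //.
  have sp : (0 < size (s1 ^+ d))%N by rewrite lt0n size_poly_eq0 expf_neq0.
  by rewrite -(prednK sp) size_exp s1sz sf /= mul1n addnS addnC.
have sg : (size (g ^+ d) < N.+1)%N.
  case: (eqVneq g 0) => [->|gn]; first by rewrite expr0n (negPf (lt0n_neq0 fd0)) size_poly0.
  have sp : (0 < size (g ^+ d))%N by rewrite lt0n size_poly_eq0 expf_neq0.
  by rewrite -(prednK sp) size_exp ltnS mulnC gsz.
have sM : size M = N.+1 by rewrite /M addrC size_polyDl size_polyN ?su.
have M0 : M != 0 by rewrite -size_poly_eq0 sM.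
have eM := allroots M0 rM; rewrite sM /= in eM.
have cop : coprimep s1 g.
  case: (boolP (coprimep s1 g)) => // ncop; exfalso.
  have /closed_rootP [c rc] : size (gcdp s1 g) != 1 by move: ncop; rewrite /coprimep.
  have r1 : root s1 c := root_dvdp (dvdp_gcdl s1 g) rc.
  have r2 : root g c := root_dvdp (dvdp_gcdr s1 g) rc.
  have cx : c = x0.
    apply: rM; rewrite /root /M /u hornerD hornerN hornerZ hornerM !horner_exp (rootP r1) (rootP r2).
    by rewrite expr0n (negPf (lt0n_neq0 fd0)) mul0r mulr0 subr0.
  rewrite cx in r1 r2.
  set P := 'X - x0%:P.
  have eg : g = (g %/ P) * P by rewrite divpK // -root_factor_theorem.
  have es1 : s1 = (s1 %/ P) * P by rewrite divpK // -root_factor_theorem.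
  set g' := g %/ P in eg; set s1' := s1 %/ P in es1.
  have s1'nz : s1' != 0 by apply: contraNneq s1nz => e; rewrite es1 e mul0r.
  have s1'sz : size s1' = 1%N.
    by move: s1sz; rewrite es1 size_Mmonic ?monicXsubC // size_XsubC addn2 /= => /eqP; rewrite eqSS => /eqP.
  apply: (hmin n); first exact: nN.
  exists [:: g'; s1']; split => //=.
  - by rewrite s1'nz orbT.
  - rewrite sf /=; apply/eqP; rewrite eqn_leq; apply/andP; split.
      apply: po_ub => -[|[|j']].
      + move=> /= g'nz; have gn : g != 0 by rewrite eg mulf_neq0 // polyXsubC_eq0.
        have sg' : (0 < size g')%N by rewrite lt0n size_poly_eq0.
        move: (gsz gn); rewrite eg size_Mmonic ?monicXsubC // size_XsubC addn2 /=.
        rewrite -(prednK sg') mulnS /= muln0 addn0 addnC ltn_add2r; exact: ltnW.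
      + by move=> /= _; rewrite s1'sz muln0 add0n muln1.
      + by rewrite nth_default ?eqxx.
    have h1 : [:: g'; s1']`_1 != 0 by [].
    by apply: leq_trans (po_le n d h1); rewrite /= s1'sz muln0 add0n muln1.
  - move=> P' oc' h'; apply: hz0 oc' _; rewrite hev.
    move: h'; rewrite heval_two /=; last by case=> [|[|j']] //= _; rewrite nth_nil.
    move=> h'; rewrite eg es1 !hornerM hornerXsubC.
    transitivity ((g'.[P'.1] + s1'.[P'.1] * P'.2) * (P'.1 - x0)); first by ring.
    by rewrite h' mul0r.
set P := 'X - x0%:P.
have dM : P * M^`() - M *+ N = 0.
  rewrite eM derivZ deriv_exp derivXsubC mul1r -!mul_polyC.
  have eP : P ^+ N = P * P ^+ N.-1 by rewrite -exprS prednK // addn_gt0 fd0 orbT.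
  rewrite eP; move: (P ^+ N.-1) ((lead_coef M)%:P) => PN l; ring.
have dG : g ^+ d.-1 * (P * g^`() *+ d - g *+ N) = (P * u^`() - u *+ N) + (P * M^`() - M *+ N).
  rewrite /M derivB deriv_exp.
  have eg : g ^+ d = g * g ^+ d.-1 by rewrite -exprS fdS.
  rewrite eg; move: (g ^+ d.-1) (g^`()) (u^`()) => gd g' u'; ring.
have key : s1 ^+ d.-1 %| g ^+ d.-1 * (P * g^`() *+ d - g *+ N).
  rewrite dG dM addr0.
  have eu : P * u^`() - u *+ N = s1 ^+ d.-1 *
      (((-1) ^+ d)%:P * (P * (s1^`() *+ d * f + s1 * f^`()) - s1 * f *+ N)).
    rewrite /u derivZ derivM deriv_exp.
    have es : s1 ^+ d = s1 ^+ d.-1 * s1 by rewrite -exprSr fdS.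
    rewrite es -!mul_polyC; move: (s1 ^+ d.-1) (s1^`()) (f^`()) (((-1) ^+ d)%:P) => sd s1d fd sgn.
    ring.
  by rewrite eu dvdp_mulr.
have cop2 : coprimep (s1 ^+ d.-1) (g ^+ d.-1) by apply/coprimep_expl/coprimep_expr.
rewrite Gauss_dvdpr // in key.
set W := P * g^`() *+ d - g *+ N in key.
have gnz : g != 0.
  apply: contraTneq cop => ->; rewrite coprimep0; apply/negP => /eqp_size.
  by rewrite s1sz size_poly1.
set r := (size g).-1.
have gr : g`_r != 0 by rewrite -lead_coefE lead_coef_eq0.
have Wr : W`_r != 0.
  rewrite /W coefB !coefMn /P mulrBl coefB coefXD coefCM coef_deriv.
  rewrite [g`_r.+1]nth_default ?mul0rn ?mulr0 ?subr0; last by rewrite /r leqSpred.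
  rewrite -mulrnA; set x := g`_r; rewrite -(mulr_natr x (r * d)) -(mulr_natr x N) -mulrBr.
  by rewrite mulf_neq0 // natr_subnz // mulnC gsz.
have W0 : W != 0 by apply: contraNneq Wr => ->; rewrite coef0.
have sW : (size W <= size g)%N.
  rewrite /W; apply: leq_trans (size_polyD _ _) _; rewrite size_polyN geq_max.
  rewrite -(scaler_nat d) -(scaler_nat N); apply/andP; split; apply: leq_trans (size_scale_leq _ _) _ => //.
  apply: leq_trans (size_polyMleq _ _) _; rewrite /P size_XsubC /=.
  exact: lt_size_deriv gnz.
have := dvdp_leq W0 key.
have sp : (0 < size (s1 ^+ d.-1))%N by rewrite lt0n size_poly_eq0 expf_neq0.
rewrite -(prednK sp) size_exp s1sz /= mul1n fdS => dW.
apply: leq_ltn_trans (gsz gnz); rewrite leq_mul2l; apply/orP; right.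
by rewrite -ltnS fdS (leq_trans dW) // (leq_trans sW) // leqSpred.
Qed.

End Fwd.
End S.

Lemma arith_eq (n d : nat) : (0 < d)%N -> (0 < n)%N ->
  (d ^ 2 - 2 * d < n)%N = (d * d.-1 < n + d)%N.
Proof.
move=> d0 n0; rewrite -subn1 mulnBr muln1 expnS expn1.
have : (d <= d * d)%N by rewrite leq_pmulr.
move: (d * d)%N => x hx; apply/idP/idP => h; lia.
Qed.

Theorem mainTheorem4 (K : closedFieldType) (hK : [pchar K] =i pred0)
    (n d : nat) (h1d : (1 < d)%N) (hdn : (d < n)%N) (hcop : coprime n d) :
  reachable K n d (n + d) <-> (d ^ 2 - 2 * d < n)%N.
Proof.
have d0 : (0 < d)%N by exact: ltn_trans h1d.
have n0 : (0 < n)%N by exact: ltn_trans hdn.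
rewrite arith_eq //; split.
  case=> _ [f [fm sf _ [Q hQ]]].
  exact: (fwd_main hK h1d hdn hcop sf hQ).
move=> hdd; exact: (back_main hK h1d hdn hcop hdd).
Qed.
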